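(* Let $\mathfrak a=\mathbb H^p=\mathbb H_1\oplus\dots\oplus\mathbb H_p$, let $\mathfrak z$ be a $3$-dimensional real vector space, and let $A_s:\mathfrak z\to\mathrm{Im}\,\mathbb H$ ($s=1,\dots,p$) be linear isomorphisms; set $J_Z=\mathrm{diag}(L_{A_1Z},\dots,L_{A_pZ})$ and $V=\{J_Z:Z\in\mathfrak z\}$, equipped with an inner product. Let $N\in\mathcal N(V)$ and let $\phi_N:\mathfrak z\to\mathfrak z$ be defined by $N^{-1}J_ZN=J_{\phi_NZ}$. Let $N_{rs}$ denote the $4\times4$ block of $N$ mapping $\mathbb H_s$ to $\mathbb H_r$. If $N_{rs}\neq0$ for some $r,s$, then there exist $w_{rs},w'_{rs}\in\mathbb H$ with $\|w_{rs}\|=1$ and $w'_{rs}\neq0$ such that $N_{rs}=L_{w_{rs}}R_{w'_{rs}}$; moreover $w_{rs}^{-1}(A_rZ)w_{rs}=A_s(\phi_NZ)$ for all $Z\in\mathfrak z$, and $\det(A_sA_r^{-1})=\det(\phi_N)\in\{\pm1\}$, where the determinant of $A_sA_r^{-1}:\mathrm{Im}\,\mathbb H\to\mathrm{Im}\,\mathbb H$ is taken in a fixed basis.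
   Context: $\mathbb H$ denotes the quaternions with standard inner product, $L_q,R_q$ left and right multiplication by $q$. The orthogonal normalizer is $\mathcal N(V)=\{N\in O(\mathfrak a): NVN^{-1}\subset V$ and $K\mapsto NKN^{-1}$ is an orthogonal map of $V$ with respect to its inner product$\}$. The map $\phi_N$ is orthogonal both for the inner product on $\mathfrak z$ pulled back from $V$ and for the one pulled back from the trace form on $\mathfrak{so}(\mathfrak a)$. *)

(* Defs.v *)
From HB Require Import structures.
From mathcomp Require Import all_boot all_order all_algebra.
From mathcomp Require Import reals.
From mathcomp Require Import zify.
Set Implicit Arguments. Unset Strict Implicit. Unset Printing Implicit Defensive.
Import Order.TTheory GRing.Theory Num.Theory.
Local Open Scope ring_scope.

Section Quaternions.
Variable R : realType.

(* Quaternions H = R^4 as column vectors, coordinates w.r.t. (1, i, j, k). *)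
Definition qc (x : 'cV[R]_4) (k : nat) : R := x (inord k) 0.

Definition qmul (x y : 'cV[R]_4) : 'cV[R]_4 :=
  let a1 := qc x 0 in let b1 := qc x 1 in let c1 := qc x 2 in let d1 := qc x 3 in
  let a2 := qc y 0 in let b2 := qc y 1 in let c2 := qc y 2 in let d2 := qc y 3 in
  \col_(i < 4)
    [:: a1 * a2 - b1 * b2 - c1 * c2 - d1 * d2;
        a1 * b2 + b1 * a2 + c1 * d2 - d1 * c2;
        a1 * c2 - b1 * d2 + c1 * a2 + d1 * b2;
        a1 * d2 + b1 * c2 - c1 * b2 + d1 * a2]`_i.

Definition qconj (x : 'cV[R]_4) : 'cV[R]_4 :=
  \col_(i < 4) (if val i == 0%N then x i 0 else - x i 0).

Definition qnorm2 (x : 'cV[R]_4) : R := \sum_(i < 4) x i 0 ^+ 2.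

Definition qinv (x : 'cV[R]_4) : 'cV[R]_4 := (qnorm2 x)^-1 *: qconj x.

Definition Lmx (q : 'cV[R]_4) : 'M[R]_4 :=
  \matrix_(i < 4, j < 4) (qmul q (delta_mx j 0)) i 0.
Definition Rmx (q : 'cV[R]_4) : 'M[R]_4 :=
  \matrix_(i < 4, j < 4) (qmul (delta_mx j 0) q) i 0.

(* Im H : (x,y,z) |-> x i + y j + z k *)
Definition imq (v : 'cV[R]_3) : 'cV[R]_4 :=
  \col_(i < 4) (if val i == 0%N then 0 else v (inord (val i).-1) 0).

End Quaternions.

(* Block structure of a = H^p = R^(p*4): coordinate r*4+i is the i-th
   coordinate of the summand H_r. *)
Lemma blk_subproof p (a : 'I_(p * 4)) : (a %/ 4 < p)%N.
Proof. by rewrite ltn_divLR // ltn_ord. Qed.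
Lemma off_subproof p (a : 'I_(p * 4)) : (a %% 4 < 4)%N.
Proof. by rewrite ltn_pmod. Qed.
Lemma idx_subproof p (r : 'I_p) (i : 'I_4) : (r * 4 + i < p * 4)%N.
Proof. have := ltn_ord r; have := ltn_ord i; lia. Qed.

Definition blk p (a : 'I_(p * 4)) : 'I_p := Ordinal (blk_subproof a).
Definition off p (a : 'I_(p * 4)) : 'I_4 := Ordinal (off_subproof a).
Definition idx p (r : 'I_p) (i : 'I_4) : 'I_(p * 4) := Ordinal (idx_subproof r i).

Section Setting.
Variables (R : realType) (p : nat).
(* A s : z = R^3 -> Im H, given by its 3x3 matrix w.r.t. the basis (i,j,k) *)
Variable A : 'I_p -> 'M[R]_3.

Definition Aq (s : 'I_p) (Z : 'cV[R]_3) : 'cV[R]_4 := imq (A s *m Z).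

Definition JZ (Z : 'cV[R]_3) : 'M[R]_(p * 4) :=
  \matrix_(a, b) (if blk a == blk b then Lmx (Aq (blk a) Z) (off a) (off b) else 0).

Definition inV (K : 'M[R]_(p * 4)) : Prop := exists Z, K = JZ Z.

Definition is_inner_on_V (ip : 'M[R]_(p * 4) -> 'M[R]_(p * 4) -> R) : Prop :=
  [/\ forall K K', inV K -> inV K' -> ip K K' = ip K' K,
      forall (a : R) K K' K'', inV K -> inV K' -> inV K'' ->
        ip (a *: K + K') K'' = a * ip K K'' + ip K' K''
    & forall K, inV K -> K != 0 -> 0 < ip K K].

Definition conjN (N K : 'M[R]_(p * 4)) : 'M[R]_(p * 4) := N *m K *m invmx N.

Definition in_normalizer (ip : 'M[R]_(p * 4) -> 'M[R]_(p * 4) -> R)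
  (N : 'M[R]_(p * 4)) : Prop :=
  [/\ N^T *m N = 1%:M,
      forall K, inV K -> inV (conjN N K)
    & forall K K', inV K -> inV K' -> ip (conjN N K) (conjN N K') = ip K K'].

Definition Nblk (N : 'M[R]_(p * 4)) (r s : 'I_p) : 'M[R]_4 :=
  \matrix_(i < 4, j < 4) N (idx r i) (idx s j).

End Setting.

(* Main.v *)
Require Import Defs.
From HB Require Import structures.
From mathcomp Require Import all_boot all_order all_algebra.
From mathcomp Require Import reals.
From mathcomp Require Import ring lra zify.
Import Order.TTheory GRing.Theory Num.Theory.
Local Open Scope ring_scope.
Set Implicit Arguments. Unset Strict Implicit. Unset Printing Implicit Defensive.

Section Q.
Variable R : realType.
Implicit Types x y z : 'cV[R]_4.

Lemma inord_eqE n (k m : nat) : (k < n.+1)%N -> (m < n.+1)%N ->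
  ((inord k : 'I_n.+1) == inord m) = (k == m).
Proof. by move=> hk hm; rewrite -val_eqE /= !inordK. Qed.

Lemma sum4 (F : 'I_4 -> R) :
  \sum_(i < 4) F i = F (inord 0) + F (inord 1) + F (inord 2) + F (inord 3).
Proof.
rewrite !big_ord_recr big_ord0 /= add0r.
by congr (_ + _ + _ + _); congr F; apply: val_inj; rewrite /= inordK.
Qed.

Lemma sum3 (F : 'I_3 -> R) :
  \sum_(i < 3) F i = F (inord 0) + F (inord 1) + F (inord 2).
Proof.
rewrite !big_ord_recr big_ord0 /= add0r.
by congr (_ + _ + _); congr F; apply: val_inj; rewrite /= inordK.
Qed.

Lemma qext x y : qc x 0 = qc y 0 -> qc x 1 = qc y 1 -> qc x 2 = qc y 2 ->
  qc x 3 = qc y 3 -> x = y.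
Proof.
rewrite /qc => h0 h1 h2 h3; apply/matrixP => i j; rewrite (ord1 j).
have -> : i = inord i by apply: val_inj; rewrite /= inordK.
by case: i => [[|[|[|[|?]]]] Hi].
Qed.

Definition mkq (a b c d : R) : 'cV[R]_4 := \col_(i < 4) [:: a; b; c; d]`_i.

Lemma qc_mkq a b c d :
  [/\ qc (mkq a b c d) 0 = a, qc (mkq a b c d) 1 = b,
      qc (mkq a b c d) 2 = c & qc (mkq a b c d) 3 = d].
Proof. by rewrite /qc /mkq !mxE !inordK; split. Qed.

Lemma qc_mul x y :
  [/\ qc (qmul x y) 0 = qc x 0 * qc y 0 - qc x 1 * qc y 1 - qc x 2 * qc y 2 - qc x 3 * qc y 3,
      qc (qmul x y) 1 = qc x 0 * qc y 1 + qc x 1 * qc y 0 + qc x 2 * qc y 3 - qc x 3 * qc y 2,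
      qc (qmul x y) 2 = qc x 0 * qc y 2 - qc x 1 * qc y 3 + qc x 2 * qc y 0 + qc x 3 * qc y 1 &
      qc (qmul x y) 3 = qc x 0 * qc y 3 + qc x 1 * qc y 2 - qc x 2 * qc y 1 + qc x 3 * qc y 0].
Proof. by rewrite /qc /qmul /= !mxE !inordK. Qed.

Lemma qc_add x y k : qc (x + y) k = qc x k + qc y k.
Proof. by rewrite /qc mxE. Qed.
Lemma qc_opp x k : qc (- x) k = - qc x k.
Proof. by rewrite /qc mxE. Qed.
Lemma qc_scale (a : R) x k : qc (a *: x) k = a * qc x k.
Proof. by rewrite /qc mxE. Qed.
Lemma qc_zero k : qc (0 : 'cV[R]_4) k = 0.
Proof. by rewrite /qc mxE. Qed.

Lemma qc_conj x :
  [/\ qc (qconj x) 0 = qc x 0, qc (qconj x) 1 = - qc x 1,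
      qc (qconj x) 2 = - qc x 2 & qc (qconj x) 3 = - qc x 3].
Proof. by rewrite /qc /qconj !mxE /= !inordK. Qed.

Lemma qc_imq (v : 'cV[R]_3) :
  [/\ qc (imq v) 0 = 0, qc (imq v) 1 = v (inord 0) 0,
      qc (imq v) 2 = v (inord 1) 0 & qc (imq v) 3 = v (inord 2) 0].
Proof. by rewrite /qc /imq !mxE /= !inordK. Qed.

Lemma qnorm2E x : qnorm2 x = qc x 0 ^+ 2 + qc x 1 ^+ 2 + qc x 2 ^+ 2 + qc x 3 ^+ 2.
Proof. by rewrite /qnorm2 sum4. Qed.

Lemma qc_inv x k : qc (qinv x) k = (qnorm2 x)^-1 * qc (qconj x) k.
Proof. by rewrite /qinv qc_scale. Qed.

Lemma qc_delta (j : nat) k : (j < 4)%N -> (k < 4)%N ->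
  qc (delta_mx (inord j) 0 : 'cV[R]_4) k = (k == j)%:R.
Proof. by move=> hj hk; rewrite /qc mxE inord_eqE // eqxx andbT. Qed.

Section Split.
Variables x y : 'cV[R]_4.
Variable v : 'cV[R]_3.
Variables a b c d : R.
Definition qc_mul0 := let: And4 h _ _ _ := qc_mul x y in h.
Definition qc_mul1 := let: And4 _ h _ _ := qc_mul x y in h.
Definition qc_mul2 := let: And4 _ _ h _ := qc_mul x y in h.
Definition qc_mul3 := let: And4 _ _ _ h := qc_mul x y in h.
Definition qc_conj0 := let: And4 h _ _ _ := qc_conj x in h.
Definition qc_conj1 := let: And4 _ h _ _ := qc_conj x in h.
Definition qc_conj2 := let: And4 _ _ h _ := qc_conj x in h.
Definition qc_conj3 := let: And4 _ _ _ h := qc_conj x in h.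
Definition qc_imq0 := let: And4 h _ _ _ := qc_imq v in h.
Definition qc_imq1 := let: And4 _ h _ _ := qc_imq v in h.
Definition qc_imq2 := let: And4 _ _ h _ := qc_imq v in h.
Definition qc_imq3 := let: And4 _ _ _ h := qc_imq v in h.
Definition qc_mkq0 := let: And4 h _ _ _ := qc_mkq a b c d in h.
Definition qc_mkq1 := let: And4 _ h _ _ := qc_mkq a b c d in h.
Definition qc_mkq2 := let: And4 _ _ h _ := qc_mkq a b c d in h.
Definition qc_mkq3 := let: And4 _ _ _ h := qc_mkq a b c d in h.
End Split.

Definition qcE := (qc_add, qc_opp, qc_scale, qc_zero,
  qc_mul0, qc_mul1, qc_mul2, qc_mul3, qc_conj0, qc_conj1, qc_conj2, qc_conj3,
  qc_imq0, qc_imq1, qc_imq2, qc_imq3, qc_mkq0, qc_mkq1, qc_mkq2, qc_mkq3).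

Lemma qc_mulmx (A : 'M[R]_4) x k : (k < 4)%N ->
  qc (A *m x) k = A (inord k) (inord 0) * qc x 0 + A (inord k) (inord 1) * qc x 1
    + A (inord k) (inord 2) * qc x 2 + A (inord k) (inord 3) * qc x 3.
Proof. by move=> hk; rewrite {1}/qc mxE sum4. Qed.

Lemma Lmx_mul q x : Lmx q *m x = qmul q x.
Proof.
apply: qext; rewrite qc_mulmx // /Lmx !mxE -!/(qc _ _) !qcE !qc_delta //=; rewrite ?inordK //=; ring.
Qed.

Lemma Rmx_mul q x : Rmx q *m x = qmul x q.
Proof.
apply: qext; rewrite qc_mulmx // /Rmx !mxE -!/(qc _ _) !qcE !qc_delta //=; rewrite ?inordK //=; ring.
Qed.

Definition q1 := mkq 1 0 0 0.
Definition qi := mkq 0 1 0 0.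
Definition qj := mkq 0 0 1 0.
Definition qk := mkq 0 0 0 1.

Definition Q4 := (R * R * R * R)%type.
Definition tup x : Q4 := (qc x 0, qc x 1, qc x 2, qc x 3).
Lemma tup_inj x y : tup x = tup y -> x = y.
Proof. by case=> *; apply: qext. Qed.
Definition mul4 (a b : Q4) : Q4 :=
  let: (a1, b1, c1, d1) := a in let: (a2, b2, c2, d2) := b in
  (a1 * a2 - b1 * b2 - c1 * c2 - d1 * d2,
   a1 * b2 + b1 * a2 + c1 * d2 - d1 * c2,
   a1 * c2 - b1 * d2 + c1 * a2 + d1 * b2,
   a1 * d2 + b1 * c2 - c1 * b2 + d1 * a2).
Definition add4 (a b : Q4) : Q4 :=
  let: (a1, b1, c1, d1) := a in let: (a2, b2, c2, d2) := b in
  (a1 + a2, b1 + b2, c1 + c2, d1 + d2).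
Definition opp4 (a : Q4) : Q4 :=
  let: (a1, b1, c1, d1) := a in (- a1, - b1, - c1, - d1).
Definition scale4 (k : R) (a : Q4) : Q4 :=
  let: (a1, b1, c1, d1) := a in (k * a1, k * b1, k * c1, k * d1).
Definition conj4 (a : Q4) : Q4 :=
  let: (a1, b1, c1, d1) := a in (a1, - b1, - c1, - d1).
Lemma tup_mul x y : tup (qmul x y) = mul4 (tup x) (tup y).
Proof. by rewrite /tup !qcE. Qed.
Lemma tup_add x y : tup (x + y) = add4 (tup x) (tup y).
Proof. by rewrite /tup !qcE. Qed.
Lemma tup_opp x : tup (- x) = opp4 (tup x).
Proof. by rewrite /tup !qcE. Qed.
Lemma tup_scale k x : tup (k *: x) = scale4 k (tup x).
Proof. by rewrite /tup !qcE. Qed.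
Lemma tup_conj x : tup (qconj x) = conj4 (tup x).
Proof. by rewrite /tup !qcE. Qed.
Lemma tup_inv x : tup (qinv x) = scale4 (qnorm2 x)^-1 (conj4 (tup x)).
Proof. by rewrite /tup /qinv !qcE. Qed.
Lemma tup_zero : tup 0 = (0, 0, 0, 0).
Proof. by rewrite /tup !qcE. Qed.
Lemma tup_mkq a b c d : tup (mkq a b c d) = (a, b, c, d).
Proof. by rewrite /tup !qcE. Qed.
Lemma tup_imq (v : 'cV[R]_3) : tup (imq v) = (0, v (inord 0) 0, v (inord 1) 0, v (inord 2) 0).
Proof. by rewrite /tup !qcE. Qed.
Lemma pair4 (a1 b1 c1 d1 a2 b2 c2 d2 : R) :
  a1 = a2 -> b1 = b2 -> c1 = c2 -> d1 = d2 -> (a1, b1, c1, d1) = (a2, b2, c2, d2).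
Proof. by move=> -> -> -> ->. Qed.
Definition tupE := (tup_mul, tup_add, tup_opp, tup_scale, tup_conj, tup_inv, tup_zero,
  tup_mkq, tup_imq).

Ltac qt := apply: tup_inj; rewrite ?/q1 ?/qi ?/qj ?/qk !tupE;
  cbv beta iota zeta delta [mul4 add4 opp4 scale4 conj4 tup]; apply: pair4; ring.

Lemma qmulA x y z : qmul x (qmul y z) = qmul (qmul x y) z. Proof. qt. Qed.
Lemma qmulDl x y z : qmul (x + y) z = qmul x z + qmul y z. Proof. qt. Qed.
Lemma qmulDr x y z : qmul x (y + z) = qmul x y + qmul x z. Proof. qt. Qed.
Lemma qmulNl x y : qmul (- x) y = - qmul x y. Proof. qt. Qed.
Lemma qmulNr x y : qmul x (- y) = - qmul x y. Proof. qt. Qed.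
Lemma qmulBl x y z : qmul (x - y) z = qmul x z - qmul y z. Proof. qt. Qed.
Lemma qmulBr x y z : qmul x (y - z) = qmul x y - qmul x z. Proof. qt. Qed.
Lemma qmulZl (a : R) x y : qmul (a *: x) y = a *: qmul x y. Proof. qt. Qed.
Lemma qmulZr (a : R) x y : qmul x (a *: y) = a *: qmul x y. Proof. qt. Qed.
Lemma qmul0l x : qmul 0 x = 0. Proof. qt. Qed.
Lemma qmul0r x : qmul x 0 = 0. Proof. qt. Qed.
Lemma qmul1l x : qmul q1 x = x. Proof. qt. Qed.
Lemma qmul1r x : qmul x q1 = x. Proof. qt. Qed.

Lemma qnorm2_eq0 x : qnorm2 x = 0 -> x = 0.
Proof.
rewrite qnorm2E => h.
have h0 := sqr_ge0 (qc x 0); have h1 := sqr_ge0 (qc x 1).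
have h2 := sqr_ge0 (qc x 2); have h3 := sqr_ge0 (qc x 3).
have e0 : qc x 0 ^+ 2 = 0 by lra.
have e1 : qc x 1 ^+ 2 = 0 by lra.
have e2 : qc x 2 ^+ 2 = 0 by lra.
have e3 : qc x 3 ^+ 2 = 0 by lra.
move/eqP: e0; move/eqP: e1; move/eqP: e2; move/eqP: e3.
rewrite !sqrf_eq0 => /eqP ? /eqP ? /eqP ? /eqP ?.
by apply: qext; rewrite qc_zero.
Qed.

Lemma qnorm2_neq0 x : x != 0 -> qnorm2 x != 0.
Proof. by move=> hx; apply/eqP => /qnorm2_eq0 /eqP; rewrite (negPf hx). Qed.

Lemma qinvl x : x != 0 -> qmul (qinv x) x = q1.
Proof.
move=> /qnorm2_neq0; rewrite qnorm2E => hn.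
apply: qext; rewrite /q1 !qcE qnorm2E; field; exact: hn.
Qed.

Lemma qinvr x : x != 0 -> qmul x (qinv x) = q1.
Proof.
move=> /qnorm2_neq0; rewrite qnorm2E => hn.
apply: qext; rewrite /q1 !qcE qnorm2E; field; exact: hn.
Qed.

Lemma det3 (A : 'M[R]_3) :
  let a i j := A (inord i) (inord j) in
  \det A = a 0 0 * (a 1 1 * a 2%N 2%N - a 1 2%N * a 2%N 1)
         - a 1 0 * (a 0 1 * a 2%N 2%N - a 0 2%N * a 2%N 1)
         + a 2%N 0 * (a 0 1 * a 1 2%N - a 0 2%N * a 1 1).
Proof.
move=> a.
have F : forall i j : 'I_3, A i j = a (val i) (val j) by move=> i j; rewrite /a !inord_val.
rewrite (expand_det_col _ ord0) !big_ord_recl big_ord0 /cofactor.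
rewrite !(expand_det_col _ ord0) !big_ord_recl !big_ord0 /cofactor.
rewrite ![\det _]det_mx11 !mxE !F /=.
ring.
Qed.

Lemma mx_eq0 (D : 'M[R]_4) : (forall q : 'cV[R]_4, D *m q = 0) -> D = 0.
Proof.
move=> h; apply/matrixP => i j.
by have := congr1 (fun m : 'cV[R]_4 => m i 0) (h (delta_mx j 0)); rewrite -colE !mxE.
Qed.

Definition imv x : 'cV[R]_3 := \col_(i < 3) x (inord i.+1) 0.

Lemma qdecomp x : x = qc x 0 *: q1 + imq (imv x).
Proof. by apply: qext; rewrite /q1 !qcE /imv ?mxE ?inordK // /qc; ring. Qed.

Lemma imq_eq0 (v : 'cV[R]_3) : imq v = 0 -> v = 0.
Proof.
move=> h; apply/matrixP => i j; rewrite (ord1 j) mxE.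
have := congr1 (fun q => qc q (val i).+1) h; rewrite qc_zero /qc /imq mxE /= inordK /=;
  last by case: i => [[|[|[|]]]].
by rewrite inord_val.
Qed.

Lemma imqD (v v' : 'cV[R]_3) : imq (v + v') = imq v + imq v'.
Proof. by apply: qext; rewrite !qcE ?mxE ?addr0. Qed.
Lemma imqZ a (v : 'cV[R]_3) : imq (a *: v) = a *: imq v.
Proof. by apply: qext; rewrite !qcE ?mxE ?mulr0. Qed.
Lemma imq0 : imq (0 : 'cV[R]_3) = 0.
Proof. by apply: qext; rewrite !qcE ?mxE. Qed.

Lemma imqE (v : 'cV[R]_3) :
  imq v = v (inord 0) 0 *: qi + v (inord 1) 0 *: qj + v (inord 2) 0 *: qk.
Proof. by apply: qext; rewrite /qi /qj /qk !qcE; ring. Qed.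

Lemma imq_e k : (k < 3)%N ->
  imq (delta_mx (inord k) 0) = [:: qi; qj; qk]`_k.
Proof.
by case: k => [|[|[|]]] // _; apply: qext; rewrite /qi /qj /qk !qcE ?mxE ?inord_eqE.
Qed.
 

Lemma q_neq0 x : qnorm2 x = 1 -> x != 0.
Proof. by move=> h; apply/eqP => hx; move: h; rewrite hx qnorm2E !qc_zero; lra. Qed.

Lemma qcancelr (a b u : 'cV[R]_4) : u != 0 -> qmul a u = qmul b u -> a = b.
Proof.
move=> hu h; rewrite -(qmul1r a) -(qmul1r b) -(qinvr hu) !qmulA h //.
Qed.

Lemma qcancell (a b u : 'cV[R]_4) : u != 0 -> qmul u a = qmul u b -> a = b.
Proof.
move=> hu h; rewrite -(qmul1l a) -(qmul1l b) -(qinvl hu) -!qmulA h //.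
Qed.

End Q.
Arguments q1 {R}. Arguments qi {R}. Arguments qj {R}. Arguments qk {R}.
Ltac qt := apply: tup_inj; rewrite ?/q1 ?/qi ?/qj ?/qk !tupE;
  cbv beta iota zeta delta [mul4 add4 opp4 scale4 conj4 tup]; apply: pair4; ring.

Section Q.
Variable R : realType.
Implicit Types x y z : 'cV[R]_4.
Lemma qnorm2Z (a : R) x : qnorm2 (a *: x) = a ^+ 2 * qnorm2 x.
Proof. rewrite !qnorm2E !qcE; ring. Qed.

Lemma qnorm2_ge0 x : 0 <= qnorm2 x.
Proof.
rewrite qnorm2E.
have := sqr_ge0 (qc x 0); have := sqr_ge0 (qc x 1).
have := sqr_ge0 (qc x 2); have := sqr_ge0 (qc x 3); lra.
Qed.

Lemma qnormalize (v : 'cV[R]_4) : v != 0 ->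
  qnorm2 ((Num.sqrt (qnorm2 v))^-1 *: v) = 1.
Proof.
move=> hv; have hn := qnorm2_neq0 hv; have h0 := qnorm2_ge0 v.
rewrite qnorm2Z exprVn sqr_sqrtr // mulVf //.
Qed.

Definition Pq (b0 b1 b2 y : 'cV[R]_4) :=
  y - qmul (qmul qi y) b0 - qmul (qmul qj y) b1 - qmul (qmul qk y) b2.

Lemma Pq_sum (b0 b1 b2 : 'cV[R]_4) :
  Pq b0 b1 b2 q1 - qmul qi (Pq b0 b1 b2 qi) - qmul qj (Pq b0 b1 b2 qj)
  - qmul qk (Pq b0 b1 b2 qk) = 4%:R *: q1.
Proof. rewrite /Pq; qt. Qed.

Lemma Pq_idi (b0 b1 b2 y : 'cV[R]_4) :
  qmul qi (Pq b0 b1 b2 y) - qmul (Pq b0 b1 b2 y) b0 =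
  qmul (qmul qi y) (q1 + qmul b0 b0) + qmul (qmul qk y) (qmul b2 b0 - b1)
  + qmul (qmul qj y) (qmul b1 b0 + b2).
Proof. rewrite /Pq; qt. Qed.

Lemma Pq_idj (b0 b1 b2 y : 'cV[R]_4) :
  qmul qj (Pq b0 b1 b2 y) - qmul (Pq b0 b1 b2 y) b1 =
  qmul (qmul qj y) (q1 + qmul b1 b1) + qmul (qmul qi y) (qmul b0 b1 - b2)
  + qmul (qmul qk y) (qmul b2 b1 + b0).
Proof. rewrite /Pq; qt. Qed.

Lemma Pq_idk (b0 b1 b2 y : 'cV[R]_4) :
  qmul qk (Pq b0 b1 b2 y) - qmul (Pq b0 b1 b2 y) b2 =
  qmul (qmul qk y) (q1 + qmul b2 b2) + qmul (qmul qi y) (qmul b0 b2 + b1)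
  + qmul (qmul qj y) (qmul b1 b2 - b0).
Proof. rewrite /Pq; qt. Qed.
End Q.

Section Q.
Variable R : realType.
Section Key.
Variables (M : 'M[R]_4) (T : 'M[R]_3).
Hypothesis H : forall x : 'cV[R]_3, Lmx (imq x) *m M = M *m Lmx (imq (T *m x)).
Hypothesis hM : M != 0.

Lemma Hq (x : 'cV[R]_3) (q : 'cV[R]_4) : qmul (imq x) (M *m q) = M *m qmul (imq (T *m x)) q.
Proof. by rewrite -!Lmx_mul !mulmxA H. Qed.

Lemma zero_lemma (D : 'M[R]_4) : T \in unitmx ->
  (forall (x : 'cV[R]_3) (q : 'cV[R]_4), qmul (imq x) (D *m q) = D *m qmul (imq (T *m x)) q) ->
  D *m q1 = 0 -> D = 0.
Proof.
move=> hT hD h1; apply: mx_eq0 => q.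
rewrite (qdecomp q) mulmxDr -scalemxAr h1 scaler0 add0r.
by rewrite -[imv q](mulKVmx hT) -[imq _]qmul1r -hD h1 qmul0r.
Qed.

Lemma T_unit : T \in unitmx.
Proof.
rewrite unitmxE unitfE -det_tr; apply/negP => /det0P [v hv hvT].
have hx : T *m v^T = 0 by rewrite -(trmxK T) -trmx_mul hvT trmx0.
have hx0 : imq v^T != 0.
  by apply/eqP => /imq_eq0 /(congr1 trmx); rewrite trmxK trmx0 => /eqP; rewrite (negPf hv).
apply: (negP hM); apply/eqP; apply: mx_eq0 => q.
apply: (qcancell hx0); rewrite Hq hx imq0 qmul0l mulmx0 qmul0r //.
Qed.

Lemma M_inj (c : 'cV[R]_4) : M *m c = 0 -> c = 0.
Proof.
move=> hc; apply/eqP/negPn/negP => hc0.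
have hD : M *m Rmx c = 0.
  apply: zero_lemma T_unit _ _.
  - by move=> x q; rewrite -!mulmxA !Rmx_mul Hq qmulA.
  - by rewrite -mulmxA Rmx_mul qmul1l.
apply: (negP hM); apply/eqP; apply: mx_eq0 => q.
have := congr1 (fun D => D *m qmul q (qinv c)) hD.
by rewrite mul0mx -mulmxA Rmx_mul -qmulA qinvl // qmul1r.
Qed.

Let u := M *m q1.

Lemma M_b (x : 'cV[R]_3) : M *m imq (T *m x) = qmul (imq x) u.
Proof. by rewrite /u Hq qmul1r. Qed.

Lemma M_bb (x y : 'cV[R]_3) :
  M *m qmul (imq (T *m x)) (imq (T *m y)) = qmul (qmul (imq x) (imq y)) u.
Proof. by rewrite -[imq (T *m y)]qmul1r -!Hq qmulA. Qed.

Lemma rel (a : R) (x y z : 'cV[R]_3) : qmul (imq x) (imq y) = a *: imq z ->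
  qmul (imq (T *m x)) (imq (T *m y)) = a *: imq (T *m z).
Proof.
move=> h; apply/eqP; rewrite -subr_eq0; apply/eqP; apply: M_inj.
by rewrite mulmxBr M_bb -scalemxAr M_b h qmulZl subrr.
Qed.

Lemma rel2 (x : 'cV[R]_3) : qmul (imq x) (imq x) = - q1 ->
  qmul (imq (T *m x)) (imq (T *m x)) = - q1.
Proof.
move=> h; apply/eqP; rewrite -subr_eq0; apply/eqP; apply: M_inj.
by rewrite mulmxBr M_bb h mulmxN /u qmulNl qmul1l opprK addNr.
Qed.


Definition e3 k : 'cV[R]_3 := delta_mx (inord k) 0.
Let b k := imq (T *m e3 k).

Lemma r2 k : (k < 3)%N -> qmul (b k) (b k) = - q1.
Proof. by move=> hk; apply: rel2; rewrite /e3 imq_e //; case: k hk => [|[|[|]]] //= _; qt. Qed.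

Lemma r_ij (a : R) i j k : (i < 3)%N -> (j < 3)%N -> (k < 3)%N ->
  qmul [:: qi; qj; qk]`_i [:: qi; qj; qk]`_j = a *: [:: qi; qj; qk]`_k ->
  qmul (b i) (b j) = a *: b k.
Proof. by move=> hi hj hk h; apply: rel; rewrite /e3 !imq_e. Qed.

Lemma cV3E (x : 'cV[R]_3) :
  x = x (inord 0) 0 *: e3 0 + x (inord 1) 0 *: e3 1 + x (inord 2) 0 *: e3 2.
Proof.
apply/matrixP => i j; rewrite (ord1 j) !mxE -(inord_val i).
case: i => [[|[|[|i]]] hi] //=; rewrite ?inord_eqE //=; ring.
Qed.

Lemma imqT (x : 'cV[R]_3) :
  imq (T *m x) = x (inord 0) 0 *: b 0 + x (inord 1) 0 *: b 1 + x (inord 2) 0 *: b 2.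
Proof. by rewrite {1}(cV3E x) !mulmxDr -!scalemxAr !imqD !imqZ. Qed.

Lemma exP : exists y0, Pq (b 0) (b 1) (b 2) y0 != 0.
Proof.
case: (eqVneq (Pq (b 0) (b 1) (b 2) q1) 0) => [h1|]; last by eexists; eauto.
case: (eqVneq (Pq (b 0) (b 1) (b 2) qi) 0) => [h2|]; last by eexists; eauto.
case: (eqVneq (Pq (b 0) (b 1) (b 2) qj) 0) => [h3|]; last by eexists; eauto.
case: (eqVneq (Pq (b 0) (b 1) (b 2) qk) 0) => [h4|]; last by eexists; eauto.
have := Pq_sum (b 0) (b 1) (b 2); rewrite h1 h2 h3 h4 !qmul0r !subr0.
move=> /(congr1 (fun q => qc q 0)); rewrite qc_zero qc_scale /q1 qc_mkq0 mulr1.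
by move=> /eqP; rewrite eq_sym pnatr_eq0.
Qed.

Lemma key : exists w w' : 'cV[R]_4,
  [/\ qnorm2 w = 1, w' != 0, M = Lmx w *m Rmx w',
      forall x : 'cV[R]_3, qmul (imq x) w = qmul w (imq (T *m x)) & \det T = 1].
Proof.
have r00 := r2 (isT : (0 < 3)%N).
have r11 := r2 (isT : (1 < 3)%N).
have r22 := r2 (isT : (2 < 3)%N).
have r01 : qmul (b 0) (b 1) = b 2.
  by rewrite -[b 2]scale1r; apply: r_ij => //=; qt.
have r12 : qmul (b 1) (b 2) = b 0.
  by rewrite -[b 0]scale1r; apply: r_ij => //=; qt.
have r20 : qmul (b 2) (b 0) = b 1.
  by rewrite -[b 1]scale1r; apply: r_ij => //=; qt.
have r10 : qmul (b 1) (b 0) = - b 2.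
  by rewrite -scaleN1r; apply: r_ij => //=; qt.
have r21 : qmul (b 2) (b 1) = - b 0.
  by rewrite -scaleN1r; apply: r_ij => //=; qt.
have r02 : qmul (b 0) (b 2) = - b 1.
  by rewrite -scaleN1r; apply: r_ij => //=; qt.
have [y0 hv] := exP.
set v := Pq (b 0) (b 1) (b 2) y0 in hv.
have vi : qmul qi v = qmul v (b 0).
  apply/eqP; rewrite -subr_eq0 Pq_idi r00 r20 r10 addrN subrr addNr !qmul0r.
  by rewrite !addr0.
have vj : qmul qj v = qmul v (b 1).
  apply/eqP; rewrite -subr_eq0 Pq_idj r11 r01 r21 addrN subrr addNr !qmul0r.
  by rewrite !addr0.
have vk : qmul qk v = qmul v (b 2).
  apply/eqP; rewrite -subr_eq0 Pq_idk r22 r02 r12 addrN subrr addNr !qmul0r.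
  by rewrite !addr0.
set w := (Num.sqrt (qnorm2 v))^-1 *: v.
have hw1 : qnorm2 w = 1 by apply: qnormalize.
have hw0 := q_neq0 hw1.
have hw : forall x : 'cV[R]_3, qmul (imq x) w = qmul w (imq (T *m x)).
  move=> x; rewrite imqT imqE /w !qmulDl !qmulDr !qmulZl !qmulZr vi vj vk.
  by rewrite !scalerA; congr (_ + _ + _); congr (_ *: _); exact: mulrC.
pose w' := qmul (qinv w) u.
have hMN : M = Lmx w *m Rmx w'.
  apply/eqP; rewrite -subr_eq0; apply/eqP; apply: zero_lemma T_unit _ _.
  - move=> x q; rewrite !mulmxBl qmulBr Hq -!mulmxA !Rmx_mul !Lmx_mul.
    rewrite [qmul (imq x) (qmul w _)]qmulA hw -qmulA.
    by rewrite [qmul (imq (T *m x)) (qmul q _)]qmulA.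
  - rewrite mulmxBl -mulmxA Rmx_mul Lmx_mul qmul1l /w' qmulA qinvr // qmul1l.
    by rewrite /u subrr.
exists w, w'; split => //.
- apply/negP => /eqP hw'0; apply: (negP hM); apply/eqP; apply: mx_eq0 => q.
  by rewrite hMN -mulmxA Rmx_mul Lmx_mul hw'0 qmul0r qmul0r.
- have hb : forall k, b k = imq (col (inord k) T) by move=> k; rewrite /b /e3 colE.
  move: r01 r22; rewrite !hb.
  move=> /(congr1 (@tup R)); rewrite !tupE; cbv beta iota zeta delta [mul4 add4 opp4 scale4 conj4 tup].
  case; rewrite !mxE => _ h1 h2 h3.
  move=> /(congr1 (@tup R)); rewrite !tupE; cbv beta iota zeta delta [mul4 add4 opp4 scale4 conj4 tup].
  case; rewrite !mxE => h4 _ _ _.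
  rewrite det3 /=.
  rewrite -h1 -h2 -h3 in h4 *.
  by apply: oppr_inj; rewrite -h4; ring.
Qed.
End Key.
End Q.

Lemma blk_idx p (r : 'I_p) (i : 'I_4) : blk (idx r i) = r.
Proof. apply: val_inj => /=; have := ltn_ord i; lia. Qed.
Lemma off_idx p (r : 'I_p) (i : 'I_4) : off (idx r i) = i.
Proof. apply: val_inj => /=; have := ltn_ord i; lia. Qed.
Lemma idx_blk_off p (c : 'I_(p * 4)) : idx (blk c) (off c) = c.
Proof. apply: val_inj => /=; lia. Qed.

Lemma sum_blk (R : realType) p (r : 'I_p) (F : 'I_(p * 4) -> R) :
  (forall c, blk c != r -> F c = 0) ->
  \sum_c F c = \sum_(k < 4) F (idx r k).
Proof.
move=> hF; rewrite (bigID (fun c => blk c == r)) /= [X in _ + X]big1 ?addr0;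
  last by move=> c /hF.
rewrite (reindex_onto (idx r) (@off p)) /=; last first.
  by move=> c /eqP <-; rewrite idx_blk_off.
by apply: eq_bigl => k; rewrite blk_idx off_idx !eqxx.
Qed.

Lemma JZN_blk (R : realType) p (A : 'I_p -> 'M[R]_3) Z (N : 'M[R]_(p * 4)) r s :
  Nblk (JZ A Z *m N) r s = Lmx (Aq A r Z) *m Nblk N r s.
Proof.
apply/matrixP => i j; rewrite /Nblk !mxE (@sum_blk _ _ r).
  by apply: eq_bigr => k _; rewrite !mxE !blk_idx !off_idx eqxx.
by move=> c hc; rewrite !mxE blk_idx eq_sym (negPf hc) mul0r.
Qed.

Lemma NJZ_blk (R : realType) p (A : 'I_p -> 'M[R]_3) Z (N : 'M[R]_(p * 4)) r s :
  Nblk (N *m JZ A Z) r s = Nblk N r s *m Lmx (Aq A s Z).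
Proof.
apply/matrixP => i j; rewrite /Nblk !mxE (@sum_blk _ _ s).
  by apply: eq_bigr => k _; rewrite !mxE !blk_idx !off_idx eqxx.
by move=> c hc; rewrite !mxE blk_idx (negPf hc) mulr0.
Qed.

Lemma mx_ext4 (R : realType) (X Y : 'M[R]_4) : (forall q : 'cV[R]_4, X *m q = Y *m q) -> X = Y.
Proof. move=> h; apply/eqP; rewrite -subr_eq0; apply/eqP; apply: mx_eq0 => q; by rewrite mulmxBl h subrr. Qed.

Lemma Lmx_lin (R : realType) (a : R) (q q' : 'cV[R]_4) : Lmx (a *: q + q') = a *: Lmx q + Lmx q'.
Proof. by apply: mx_ext4 => x; rewrite mulmxDl -scalemxAl !Lmx_mul qmulDl qmulZl. Qed.

Lemma lin_entry (R : realType) m n (a : R) (X Y : 'M[R]_(m, n)) i j :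
  (a *: X + Y) i j = a * X i j + Y i j.
Proof. by rewrite !mxE. Qed.

Lemma JZ_entry (R : realType) p (A : 'I_p -> 'M[R]_3) Z a b :
  JZ A Z a b = if blk a == blk b then Lmx (Aq A (blk a) Z) (off a) (off b) else 0.
Proof. by rewrite /JZ mxE. Qed.

Lemma JZ_lin (R : realType) p (A : 'I_p -> 'M[R]_3) (a : R) Z Z' :
  JZ A (a *: Z + Z') = a *: JZ A Z + JZ A Z'.
Proof.
apply/matrixP => i j; rewrite lin_entry !JZ_entry; case: ifP => _; last by rewrite mulr0 addr0.
by rewrite /Aq mulmxDr -scalemxAr imqD imqZ Lmx_lin lin_entry.
Qed.


Lemma mx_key (R : realType) (X : 'M[R]_3) (i j : 'I_3) :
  X i j = ((delta_mx i 0 : 'cV[R]_3)^T *m X *m (delta_mx j 0 : 'cV[R]_3)) 0 0.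
Proof. by rewrite trmx_delta -rowE -colE !mxE. Qed.

Section Gram.
Variables (R : realType) (p : nat) (A : 'I_p -> 'M[R]_3).
Hypothesis hA : forall s, A s \in unitmx.
Variable ip : 'M[R]_(p * 4) -> 'M[R]_(p * 4) -> R.
Hypothesis hip : is_inner_on_V A ip.
Variable r0 : 'I_p.

Let beta (Z W : 'cV[R]_3) := ip (JZ A Z) (JZ A W).
Lemma inVJ Z : inV A (JZ A Z). Proof. by exists Z. Qed.
Lemma beta_sym Z W : beta Z W = beta W Z.
Proof. by case: hip => h _ _; apply: h; apply: inVJ. Qed.
Lemma beta_lin a Z Z' W : beta (a *: Z + Z') W = a * beta Z W + beta Z' W.
Proof. by case: hip => _ h _; rewrite /beta JZ_lin h //; exact: inVJ. Qed.
Lemma beta0 W : beta 0 W = 0.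
Proof. by have := beta_lin 1 0 0 W; rewrite scale1r addr0 mul1r => h; lra. Qed.
Lemma betaD Z Z' W : beta (Z + Z') W = beta Z W + beta Z' W.
Proof. by rewrite -{1}[Z]scale1r beta_lin mul1r. Qed.
Lemma betaZ a Z W : beta (a *: Z) W = a * beta Z W.
Proof. by rewrite -[a *: Z]addr0 beta_lin beta0 addr0. Qed.
Lemma betaDr Z W W' : beta Z (W + W') = beta Z W + beta Z W'.
Proof. by rewrite beta_sym betaD !(beta_sym _ Z). Qed.
Lemma betaZr a Z W : beta Z (a *: W) = a * beta Z W.
Proof. by rewrite beta_sym betaZ beta_sym. Qed.

Lemma quad3 (X : 'M[R]_3) (Z W : 'cV[R]_3) :
  (Z^T *m X *m W) 0 0 = \sum_(j < 3) \sum_(i < 3) Z i 0 * X i j * W j 0.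
Proof.
rewrite mxE; apply: eq_bigr => j _; rewrite mxE big_distrl /=.
by apply: eq_bigr => i _; rewrite mxE.
Qed.

Let G : 'M[R]_3 := \matrix_(i, j) beta (delta_mx i 0) (delta_mx j 0).

Lemma betaE Z W : beta Z W = (Z^T *m G *m W) 0 0.
Proof.
have GE : forall a b, (a < 3)%N -> (b < 3)%N -> G (inord a) (inord b) = beta (e3 R a) (e3 R b).
  by move=> a b _ _; rewrite mxE.
rewrite {1}(cV3E Z) {1}(cV3E W) !betaD !betaZ !betaDr !betaZr.
rewrite quad3 !sum3 !GE //. clear GE; clearbody G; clearbody beta.
move: (beta (e3 R 0) (e3 R 0)) (beta (e3 R 0) (e3 R 1)) (beta (e3 R 0) (e3 R 2))
  (beta (e3 R 1) (e3 R 0)) (beta (e3 R 1) (e3 R 1)) (beta (e3 R 1) (e3 R 2))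
  (beta (e3 R 2) (e3 R 0)) (beta (e3 R 2) (e3 R 1)) (beta (e3 R 2) (e3 R 2)).
move: (Z (inord 0) 0) (Z (inord 1) 0) (Z (inord 2) 0) (W (inord 0) 0) (W (inord 1) 0) (W (inord 2) 0).
move=> *. ring.
Qed.

Lemma JZ_inj Z : JZ A Z = 0 -> Z = 0.
Proof.
move=> h.
have e : Nblk (JZ A Z) r0 r0 = Lmx (Aq A r0 Z).
  by apply/matrixP => i j; rewrite /Nblk mxE JZ_entry !blk_idx !off_idx eqxx.
have h1 : Aq A r0 Z = 0.
  have : Nblk (JZ A Z) r0 r0 = 0 by rewrite h; apply/matrixP => i j; rewrite !mxE.
  rewrite e => /(congr1 (fun X => X *m q1)); rewrite Lmx_mul qmul1r mul0mx //.
have h2 : A r0 *m Z = 0 by apply: imq_eq0.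
by rewrite -(mulKmx (hA r0) Z) h2 mulmx0.
Qed.

Lemma beta_pos Z : beta Z Z = 0 -> Z = 0.
Proof.
case: hip => _ _ h3 h; apply: JZ_inj; apply/eqP; apply: contraT => hne.
by have := h3 _ (inVJ Z) hne; rewrite -/(beta Z Z) h ltxx.
Qed.

Lemma G_unit : \det G != 0.
Proof.
apply/negP => /det0P [v hv hvG].
have : beta v^T v^T = 0 by rewrite betaE trmxK hvG mul0mx mxE.
move/beta_pos => /(congr1 trmx); rewrite trmxK trmx0 => h.
by rewrite h eqxx in hv.
Qed.

Variables (N : 'M[R]_(p * 4)) (phi : 'M[R]_3).
Hypothesis hN : in_normalizer A ip N.
Hypothesis hphi : forall Z : 'cV[R]_3, invmx N *m JZ A Z *m N = JZ A (phi *m Z).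

Lemma beta_inv Z W : beta (phi *m Z) (phi *m W) = beta Z W.
Proof.
case: hN => hNN _ h3; have [_ hU] := mulmx1_unit hNN.
have e : forall Y, conjN N (JZ A (phi *m Y)) = JZ A Y.
  move=> Y; rewrite /conjN -hphi !mulmxA mulmxV // mul1mx -mulmxA mulmxV //.
  by rewrite mulmx1.
by rewrite /beta -[in RHS](e Z) -[in RHS](e W) h3 //; apply: inVJ.
Qed.

Lemma det_phi : \det phi = 1 \/ \det phi = -1.
Proof.
have hG : phi^T *m G *m phi = G.
  apply/matrixP => i j; rewrite (mx_key (phi^T *m G *m phi)) (mx_key G).
  by rewrite !mulmxA -trmx_mul -[in LHS]mulmxA -!betaE beta_inv.
have := congr1 determinant hG; rewrite !det_mulmx det_tr => h.
have : (\det phi ^+ 2 - 1) * \det G = 0.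
  by rewrite mulrBl mul1r -{2}h; ring.
move/eqP; rewrite mulf_eq0 (negPf G_unit) orbF subr_eq0 sqrf_eq1.
by case/orP => /eqP ->; [left | right].
Qed.
End Gram.

Unset Implicit Arguments.
Theorem lemma1 (R : realType) (p : nat) (A : 'I_p -> 'M[R]_3)
  (hA : forall s, A s \in unitmx)
  (ip : 'M[R]_(p * 4) -> 'M[R]_(p * 4) -> R) (hip : is_inner_on_V A ip)
  (N : 'M[R]_(p * 4)) (hN : in_normalizer A ip N)
  (phi : 'M[R]_3)
  (hphi : forall Z : 'cV[R]_3, invmx N *m JZ A Z *m N = JZ A (phi *m Z))
  (r s : 'I_p) :
  Nblk N r s != 0 ->
  exists w w' : 'cV[R]_4,
    [/\ qnorm2 w = 1, w' != 0,
        Nblk N r s = Lmx w *m Rmx w',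
        (forall Z : 'cV[R]_3, qmul (qinv w) (qmul (Aq A r Z) w) = Aq A s (phi *m Z))
      & \det (A s *m invmx (A r)) = \det phi /\ (\det phi = 1 \/ \det phi = -1)].
Proof.
move=> hnz.
have hNU : N \in unitmx by case: hN => hNN _ _; have [_ ?] := mulmx1_unit hNN.
set M := Nblk N r s in hnz *.
set T := A s *m phi *m invmx (A r).
have HM : forall Z, Lmx (Aq A r Z) *m M = M *m Lmx (Aq A s (phi *m Z)).
  by move=> Z; rewrite -JZN_blk -NJZ_blk -hphi !mulmxA mulmxV // mul1mx.
have HT : forall x, Lmx (imq x) *m M = M *m Lmx (imq (T *m x)).
  move=> x; have := HM (invmx (A r) *m x); rewrite /Aq mulKVmx // => ->.
  by rewrite /T !mulmxA.
have [w [w' [h1 h2 h3 h4 h5]]] := key HT hnz.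
exists w, w'; split => //.
  move=> Z; rewrite /Aq h4 qmulA qinvl ?q_neq0 // qmul1l /T -!mulmxA mulKmx //.
have hd := det_phi hA hip r hN hphi.
move: h5; rewrite /T !det_mulmx !det_inv => h5.
split=> //; case: hd => hd; rewrite hd in h5 *.
  by rewrite mulr1 in h5.
by rewrite mulrN1 mulNr in h5; rewrite -h5 opprK.
Qed.
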